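(* Let $S$ be a closed convex subset of $\mathbb{R}^p$ and let $x,y\in S$. Then for any $u\in N_S(x)$ and $v\in N_S(y)$, $$(u-v)^{T}(x-y)\le-2r(|u|+|v|),$$ where $r:=\inf_{w\in\partial S}|c-w|$ is the distance from the midpoint $c:=\tfrac12(x+y)$ to the boundary $\partial S$. Moreover, if $S$ is strongly convex with strong convexity constant $R\in(0,\infty)$, then $$(u-v)^{T}(x-y)\le-\frac{1}{2R}(|u|+|v|)|x-y|^2.$$
   Context: $N_S(u):=\{s\in\mathbb{R}^p:\inf_{z\in S}s^{T}(z-u)\ge0\}$ is the inward normal cone of $S$ at $u$; $|\cdot|$ is the Euclidean norm and $\mathbb{S}_p$ the unit sphere. For $S$ convex, its strong convexity constant is $$R:=\inf\Big\{r\ge0:\ S\subset\bigcap_{u\in\partial S,\ v\in N_S(u)\cap\mathbb{S}_p}\overline{B}_r(u+rv)\Big\},$$ where $\overline{B}_r(c)$ is the closed Euclidean ball of radius $r$ centred at $c$; $S$ is called strongly convex if $R$ is finite. *)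

(* Defs.v *)
From HB Require Import structures.
From mathcomp Require Import all_boot all_order all_algebra.
From mathcomp Require Import all_classical all_reals.
Set Implicit Arguments. Unset Strict Implicit. Unset Printing Implicit Defensive.
Import Order.TTheory GRing.Theory Num.Theory.
Local Open Scope classical_set_scope.
Local Open Scope ring_scope.

Section Defs.
Variables (R : realType) (p : nat).
Implicit Types (u v w z s c : 'rV[R]_p) (S : set 'rV[R]_p).

Definition dotp s z : R := \sum_(i < p) s 0 i * z 0 i.
Definition enorm z : R := Num.sqrt (dotp z z).

Definition cball (c : 'rV[R]_p) (r : R) : set 'rV[R]_p :=
  [set z | enorm (z - c) <= r].

Definition convex_set S : Prop :=
  forall a b t, S a -> S b -> 0 <= t <= 1 -> S (t *: a + (1 - t) *: b).

Definition eclosed S : Prop :=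
  forall z, (forall e : R, 0 < e -> exists2 w, S w & enorm (w - z) < e) -> S z.

Definition boundary S : set 'rV[R]_p :=
  [set w | forall e : R, 0 < e ->
     (exists2 z, S z & enorm (z - w) < e) /\ (exists2 z, ~ S z & enorm (z - w) < e)].

(* inward normal cone: N_S(u) = { s | inf_{z in S} s^T (z - u) >= 0 } *)
Definition normal_cone S u : set 'rV[R]_p :=
  [set s | forall z, S z -> 0 <= dotp s (z - u)].

Definition dist_boundary S c : R := inf [set enorm (c - w) | w in boundary S].

Definition sc_const S : R :=
  inf [set r : R | 0 <= r /\
        forall z, S z -> forall u v, boundary S u -> normal_cone S u v ->
          enorm v = 1 -> cball (u + r *: v) r z].

End Defs.

(* Main.v *)
Require Import Defs.
From HB Require Import structures.
From mathcomp Require Import all_boot all_order all_algebra.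
From mathcomp Require Import all_classical all_reals.
From mathcomp Require Import ring lra.
Import Order.TTheory GRing.Theory Num.Theory.
Local Open Scope classical_set_scope.
Local Open Scope ring_scope.

Set Implicit Arguments.
Section H.
Variables (R : realType) (p : nat).
Implicit Types (u v w z s c : 'rV[R]_p).

Lemma dotpDl u v w : dotp (u + v) w = dotp u w + dotp v w.
Proof. rewrite /dotp -big_split; apply: eq_bigr => i _; by rewrite mxE mulrDl. Qed.
Lemma dotpDr u v w : dotp w (u + v) = dotp w u + dotp w v.
Proof. rewrite /dotp -big_split; apply: eq_bigr => i _; by rewrite mxE mulrDr. Qed.
Lemma dotpZl a u w : dotp (a *: u) w = a * dotp u w.
Proof. rewrite /dotp mulr_sumr; apply: eq_bigr => i _; by rewrite mxE mulrA. Qed.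
Lemma dotpZr a u w : dotp w (a *: u) = a * dotp w u.
Proof. rewrite /dotp mulr_sumr; apply: eq_bigr => i _; by rewrite mxE mulrCA. Qed.
Lemma dotpC u w : dotp u w = dotp w u.
Proof. rewrite /dotp; apply: eq_bigr => i _; by rewrite mulrC. Qed.
Lemma dotpNl u w : dotp (- u) w = - dotp u w.
Proof. by rewrite -scaleN1r dotpZl mulN1r. Qed.
Lemma dotpNr u w : dotp w (- u) = - dotp w u.
Proof. by rewrite -scaleN1r dotpZr mulN1r. Qed.
Lemma dotpBl u v w : dotp (u - v) w = dotp u w - dotp v w.
Proof. by rewrite dotpDl dotpNl. Qed.
Lemma dotpBr u v w : dotp w (u - v) = dotp w u - dotp w v.
Proof. by rewrite dotpDr dotpNr. Qed.
Lemma dotp_ge0 u : 0 <= dotp u u.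
Proof. apply: sumr_ge0 => i _; rewrite -expr2; exact: sqr_ge0. Qed.
Lemma enorm_ge0 u : 0 <= enorm u.
Proof. exact: sqrtr_ge0. Qed.
Lemma enorm_sq u : enorm u ^+ 2 = dotp u u.
Proof. by rewrite /enorm sqr_sqrtr // dotp_ge0. Qed.
Lemma enormZ a u : enorm (a *: u) = `|a| * enorm u.
Proof.
by rewrite /enorm dotpZl dotpZr mulrA -expr2 sqrtrM ?sqr_ge0 // sqrtr_sqr.
Qed.
Lemma enormN u : enorm (- u) = enorm u.
Proof. by rewrite -scaleN1r enormZ normrN normr1 mul1r. Qed.
Lemma enormB u v : enorm (u - v) = enorm (v - u).
Proof. by rewrite -enormN opprB. Qed.
Lemma enorm_eq0 u : enorm u = 0 -> u = 0.
Proof.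
move=> h. have : dotp u u = 0 by rewrite -enorm_sq h expr2 mul0r.
move/eqP; rewrite /dotp psumr_eq0; last by move=> i _; rewrite -expr2 sqr_ge0.
move/allP => H; apply/matrixP => i j; rewrite mxE (ord1 i).
by have /(_ (mem_index_enum j)) := H j; rewrite implyTb -expr2 sqrf_eq0 => /eqP.
Qed.
Lemma dotp_self u : dotp u u = enorm u ^+ 2.
Proof. by rewrite enorm_sq. Qed.
Lemma enorm_nz u : enorm u != 0 -> enorm ((enorm u)^-1 *: u) = 1.
Proof. move=> h; rewrite enormZ ger0_norm ?invr_ge0 ?enorm_ge0 // mulVf //. Qed.

Lemma key1 (S : set 'rV[R]_p) x c u : S c -> normal_cone S x u ->
  dist_boundary S c * enorm u <= dotp u (c - x).
Proof.
move=> Sc Nu.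
have [u0|unz] := eqVneq (enorm u) 0.
  by rewrite u0 mulr0; apply: Nu.
set nu := enorm u.
have nu_gt0 : 0 < nu by rewrite lt_neqAle eq_sym unz enorm_ge0.
pose w := - (nu^-1 *: u).
have nw : enorm w = 1 by rewrite /w enormN enorm_nz.
have uw : dotp u w = - nu.
  rewrite /w dotpNr dotpZr dotp_self /nu; congr (- _).
  by rewrite expr2 mulrA mulVf // mul1r.
pose T := [set t : R | 0 <= t /\ S (c + t *: w)].
have ubT : forall t, T t -> t * nu <= dotp u (c - x).
  move=> t [t0 St]; have := Nu _ St.
  have -> : c + t *: w - x = (c - x) + t *: w.
    by apply/matrixP => i j; rewrite !mxE; ring.
  by rewrite dotpDr dotpZr uw mulrN subr_ge0.
pose d := dotp u (c - x) / nu.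
have T0 : T 0 by split => //; rewrite scale0r addr0.
have ubd : ubound T d.
  by move=> t /ubT h; rewrite /d ler_pdivlMr.
have hsT : has_sup T by split; [exists 0 | exists d].
set ts := sup T.
have ts0 : 0 <= ts by apply: sup_upper_bound.
have tsd : ts <= d by apply: ge_sup => //; exists 0.
pose q := c + ts *: w.
have dist t : enorm (c + t *: w - q) = `|t - ts|.
  have -> : c + t *: w - q = (t - ts) *: w.
    by apply/matrixP => i j; rewrite !mxE; ring.
  by rewrite enormZ nw mulr1.
have bq : boundary S q.
  move=> e e0; split.
    have [t Tt lt] := sup_adherent e0 hsT.
    exists (c + t *: w); first by case: Tt.
    rewrite dist ler0_norm ?subr_le0; last by apply: sup_upper_bound.
    by rewrite opprB ltrBlDr addrC -ltrBlDr.
  exists (c + (ts + e / 2) *: w).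
    move=> St.
    have : ts + e / 2 <= ts by apply: sup_upper_bound => //; split => //;
      apply: addr_ge0 => //; apply: divr_ge0 => //; apply: ltW.
    by rewrite gerDl leNgt divr_gt0.
  by rewrite dist addrAC subrr add0r ger0_norm ?divr_ge0 ?ltW // ltr_pdivrMr // ltr_pMr // ltr1n.
have rq : dist_boundary S c <= ts.
  have -> : ts = enorm (c - q).
    have -> : c - q = (-ts) *: w by apply/matrixP => i j; rewrite !mxE; ring.
    by rewrite enormZ nw mulr1 normrN ger0_norm.
  apply: ge_inf; last by exists q.
  by exists 0 => _ [z _ <-]; apply: enorm_ge0.
apply: le_trans (ler_wpM2r (ltW nu_gt0) rq) _.
by rewrite -ler_pdivlMr.
Qed.
Lemma key2 (S : set 'rV[R]_p) x y u : S x -> S y -> normal_cone S x u ->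
  0 < sc_const S ->
  enorm u * enorm (x - y) ^+ 2 <= 2 * sc_const S * dotp u (y - x).
Proof.
move=> Sx Sy Nu R0.
have a0 : 0 <= dotp u (y - x) by apply: Nu.
have [u0|unz] := eqVneq (enorm u) 0.
  by rewrite u0 mul0r; apply: mulr_ge0 => //; apply: mulr_ge0 => //; apply: ltW.
set nu := enorm u.
have nu_gt0 : 0 < nu by rewrite lt_neqAle eq_sym unz enorm_ge0.
pose n := nu^-1 *: u.
have nn : enorm n = 1 by rewrite /n enorm_nz.
have Nn : normal_cone S x n.
  by move=> z Sz; rewrite /n dotpZl; apply: mulr_ge0; [rewrite invr_ge0 ltW | apply: Nu].
have un : dotp u n = nu.
  by rewrite /n dotpZr dotp_self /nu expr2 mulrA mulVf // mul1r.
have nyx : dotp (y - x) n = nu^-1 * dotp u (y - x) by rewrite /n dotpZr dotpC.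
clearbody n.
have bx : boundary S x.
  move=> e e0; split.
    by exists x => //; rewrite subrr -(scale0r (0 : 'rV[R]_p)) enormZ normr0 mul0r.
  exists (x - (e / 2) *: n).
    move=> /Nu; have -> : x - (e / 2) *: n - x = - ((e / 2) *: n).
      by apply/matrixP => i j; rewrite !mxE; ring.
    by rewrite dotpNr dotpZr un oppr_ge0 leNgt mulr_gt0 // divr_gt0.
  have -> : x - (e / 2) *: n - x = (- (e / 2)) *: n.
    by apply/matrixP => i j; rewrite !mxE; ring.
  rewrite enormZ nn mulr1 normrN ger0_norm ?divr_ge0 ?ltW //.
  by rewrite ltr_pdivrMr // ltr_pMr // ltr1n.
move: R0; rewrite /sc_const; set E := (X in inf X) => R0.
have inE : forall r, E r -> nu * enorm (x - y) ^+ 2 <= 2 * r * dotp u (y - x).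
  move=> r [r0 H]; have := H y Sy x n bx Nn nn.
  rewrite /cball /= => hb.
  have hb2 : enorm (y - (x + r *: n)) ^+ 2 <= r ^+ 2.
    by rewrite ler_sqr ?nnegrE ?enorm_ge0.
  move: hb2; rewrite enorm_sq.
  have -> : y - (x + r *: n) = (y - x) - r *: n.
    by apply/matrixP => i j; rewrite !mxE; ring.
  have ex : forall a, dotp (a - r *: n) (a - r *: n) =
      dotp a a - 2 * r * dotp a n + r ^+ 2 * dotp n n.
    by move=> a; rewrite !dotpBl !dotpBr !dotpZl !dotpZr (dotpC n a); ring.
  rewrite ex nyx (dotp_self n) nn (dotp_self (y - x)) enormB expr1n mulr1 => h.
  have h2 : enorm (x - y) ^+ 2 <= 2 * r * (nu^-1 * dotp u (y - x)).
    set k := 2 * r * _ in h *; set m := r ^+ 2 in h; lra.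
  have := ler_wpM2l (ltW nu_gt0) h2.
  by rewrite [nu * (2 * r * _)]mulrCA mulVKf ?gt_eqF.
have hinf : has_inf E.
  apply: contrapT => nh; move: R0; rewrite inf_out //; by rewrite ltxx.
apply/ler_addgt0Pr => e e0.
have e' : 0 < e / (2 * (dotp u (y - x) + 1)).
  by apply: divr_gt0 => //; apply: mulr_gt0 => //; apply: ltr_pwDr.
have [r Er lt] := inf_adherent e' hinf.
apply: le_trans (inE _ Er) _.
set a := dotp u (y - x) in lt a0 e' *.
set R1 := inf E in lt R0 *.
set t := e / (2 * (a + 1)) in lt e'.
have ht : t * (2 * (a + 1)) = e by rewrite /t mulfVK // mulf_neq0 // gt_eqF // ltr_pwDr.
nra.
Qed.
End H.

Theorem lemma2 (R : realType) (p : nat) (S : set 'rV[R]_p) (x y : 'rV[R]_p) :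
  eclosed S -> convex_set S -> S x -> S y ->
  (forall u v, normal_cone S x u -> normal_cone S y v ->
     dotp (u - v) (x - y)
       <= - 2 * dist_boundary S (2^-1 *: (x + y)) * (enorm u + enorm v)) /\
  (0 < sc_const S ->
   forall u v, normal_cone S x u -> normal_cone S y v ->
     dotp (u - v) (x - y)
       <= - (2 * sc_const S)^-1 * (enorm u + enorm v) * enorm (x - y) ^+ 2).
Proof.
move=> _ cvx Sx Sy; split.
  move=> u v Nu Nv.
  set c := 2^-1 *: (x + y).
  have Sc : S c.
    have -> : c = 2^-1 *: x + (1 - 2^-1) *: y.
      by apply/matrixP => i j; rewrite /c !mxE; field.
    apply: cvx => //; rewrite invr_ge0 ler0n /= invf_le1 ?ler1n //.
  have h1 := key1 c Sc Nu; have h2 := key1 c Sc Nv.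
  have ex : c - x = 2^-1 *: (- (x - y)) by apply/matrixP => i j; rewrite /c !mxE; field.
  have ey : c - y = 2^-1 *: (x - y) by apply/matrixP => i j; rewrite /c !mxE; field.
  move: h1 h2; rewrite ex ey !dotpZr dotpNr dotpBl.
  set r := dist_boundary _ _; set A := dotp u _; set B := dotp v _.
  set a := enorm u; set b := enorm v => h1 h2.
  have h2i : 2^-1 * 2 = 1 :> R by rewrite mulVf // pnatr_eq0.
  set h := (2^-1 : R) in h1 h2 h2i *. nra.
move=> R0 u v Nu Nv.
have h1 := key2 y Sx Sy Nu R0; have h2 := key2 x Sy Sx Nv R0.
move: h1 h2; rewrite (@enormB _ _ y x) dotpBl.
have -> : dotp u (y - x) = - dotp u (x - y).
  by rewrite -dotpNr opprB.
set A := dotp u _; set B := dotp v _; set D := enorm _ ^+ 2.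
set a := enorm u; set b := enorm v => h1 h2.
set k := sc_const S in R0 h1 h2 *.
have k2 : (2 * k)^-1 * (2 * k) = 1 by rewrite mulVf // gt_eqF // mulr_gt0.
have k0 : 0 < (2 * k)^-1 by rewrite invr_gt0 mulr_gt0.
set m := (2 * k)^-1 in k2 k0 *.
have g1 := ler_wpM2l (ltW k0) h1; have g2 := ler_wpM2l (ltW k0) h2.
rewrite [m * (2 * k * _)]mulrA k2 mul1r in g1.
rewrite [m * (2 * k * _)]mulrA k2 mul1r in g2.
set P := m * (a * D) in g1; set Q := m * (b * D) in g2.
have -> : - m * (a + b) * D = - (P + Q) by rewrite /P /Q; ring.
lra.
Qed.
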